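(* Let $\sigma : X^* \to M$ be a finite monoid choice of generators for a monoid $M$. Then $M$ is finite if and only if the loop problem $L_\sigma(M)$ is a regular language. Likewise, if $\sigma : X^+ \to S$ is a finite semigroup choice of generators for a semigroup $S$, then $S$ is finite if and only if $L_\sigma(S)$ is regular.
   Context: Maps are written on the right ($u\sigma$ is the image of $u$ under $\sigma$). For an alphabet $X$, $X^*$ denotes the free monoid on $X$ and $X^+$ the free semigroup on $X$. A (monoid) choice of generators for a monoid $M$ is a surjective monoid morphism $\sigma : X^* \to M$; it is finite if $X$ is finite. Let $\overline{X} = \{\overline{x} : x \in X\}$ be a set of new symbols and $\hat{X} = X \cup \overline{X}$. The loop automaton of $M$ with respect to $\sigma$ is the directed edge-labelled graph with vertex set $M$ having, for every $a \in M$ and $x \in X$, an edge from $a$ to $a(x\sigma)$ labelled $x$ and an edge from $a(x\sigma)$ to $a$ labelled $\overline{x}$; labels of paths are concatenations of edge labels. The loop problem $L_\sigma(M) \subseteq \hat{X}^*$ is the set of labels of paths from the identity of $M$ to itself. For a semigroup $S$, a (semigroup) choice of generators is a surjective morphism $\sigma : X^+ \to S$; let $S^1$ be $S$ with a new identity adjoined (even if $S$ already has one) and $\sigma^1 : X^* \to S^1$ the unique extension of $\sigma$; the loop problem of $S$ is $L_\sigma(S) := L_{\sigma^1}(S^1)$. *)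

(* Defs.v *)
From Stdlib Require List.
From mathcomp Require Import all_boot.
Set Implicit Arguments. Unset Strict Implicit. Unset Printing Implicit Defensive.

Definition finite_type (T : Type) : Prop := exists s : list T, forall t : T, List.In t s.

Definition language (A : Type) := seq A -> Prop.

Definition dfa_run (A Q : Type) (delta : Q -> A -> Q) (q : Q) (w : seq A) : Q :=
  foldl delta q w.

Definition regular (A : finType) (L : language A) : Prop :=
  exists (Q : finType) (q0 : Q) (delta : Q -> A -> Q) (F : pred Q),
    forall w : seq A, L w <-> F (dfa_run delta q0 w).

Definition is_monoid (M : Type) (mul : M -> M -> M) (one : M) : Prop :=
  (forall a b c, mul a (mul b c) = mul (mul a b) c) /\
  (forall a, mul one a = a) /\ (forall a, mul a one = a).

Definition is_semigroup (S : Type) (mul : S -> S -> S) : Prop :=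
  forall a b c, mul a (mul b c) = mul (mul a b) c.

Definition monoid_choice (X M : Type) (mul : M -> M -> M) (one : M)
  (sigma : seq X -> M) : Prop :=
  sigma [::] = one /\
  (forall u v, sigma (u ++ v) = mul (sigma u) (sigma v)) /\
  (forall m, exists w, sigma w = m).

(* sigma : X^+ -> S is a surjective semigroup morphism; X^+ is represented by the
   nonempty words, and sigma's values on the empty word are irrelevant. *)
Definition semigroup_choice (X S : Type) (mul : S -> S -> S)
  (sigma : seq X -> S) : Prop :=
  (forall u v, u <> [::] -> v <> [::] -> sigma (u ++ v) = mul (sigma u) (sigma v)) /\
  (forall s, exists w, w <> [::] /\ sigma w = s).

(* Hat X = X ∪ X-bar: inl x is x, inr x is x-bar. *)
Definition hat (X : Type) := (X + X)%type.

(* Edges of the loop automaton: a --x--> a(xσ), a(xσ) --xbar--> a.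
   gen x is the generator image xσ (= σ of the one-letter word). *)
Definition loop_edge (X M : Type) (mul : M -> M -> M) (gen : X -> M)
  (a : M) (l : hat X) (b : M) : Prop :=
  match l with
  | inl x => b = mul a (gen x)
  | inr x => a = mul b (gen x)
  end.

Fixpoint loop_path (X M : Type) (mul : M -> M -> M) (gen : X -> M)
  (a : M) (w : seq (hat X)) (b : M) : Prop :=
  match w with
  | [::] => a = b
  | l :: w' => exists c, loop_edge mul gen a l c /\ loop_path mul gen c w' b
  end.

Definition loop_problem (X M : Type) (mul : M -> M -> M) (one : M)
  (sigma : seq X -> M) : language (hat X) :=
  fun w => loop_path mul (fun x => sigma [:: x]) one w one.

(* S^1 : S with a new identity adjoined (None is the new identity). *)
Definition adj_mul (S : Type) (mul : S -> S -> S) (a b : option S) : option S :=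
  match a, b with
  | None, _ => b
  | _, None => a
  | Some a', Some b' => Some (mul a' b')
  end.

Definition sigma1 (X S : Type) (sigma : seq X -> S) (w : seq X) : option S :=
  if w is [::] then None else Some (sigma w).

Definition semigroup_loop_problem (X S : Type) (mul : S -> S -> S)
  (sigma : seq X -> S) : language (hat X) :=
  loop_problem (adj_mul mul) None (sigma1 sigma).

Definition hatF (X : finType) : finType := (X + X)%type.

(* Main.v *)
Require Import Defs.
From mathcomp Require Import all_boot.
From Stdlib Require Import ClassicalEpsilon.
Set Implicit Arguments. Unset Strict Implicit. Unset Printing Implicit Defensive.

Definition pb (P : Prop) : bool := if excluded_middle_informative P then true else false.

Lemma pbE P : pb P = true <-> P.
Proof. rewrite /pb; case: excluded_middle_informative => H; split => //. Qed.

Lemma In_nth (T : Type) (d : T) (s : seq T) t :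
  List.In t s -> exists i, i < size s /\ nth d s i = t.
Proof.
elim: s => [|x s IH] //= [->|/IH [i [Hi Hn]]]; first by exists 0.
by exists i.+1.
Qed.

Lemma fin_regular (X : finType) (M : Type) (mul : M -> M -> M) (gen : X -> M) (a0 : M) :
  finite_type M -> @regular (hatF X) (fun w => loop_path mul gen a0 w a0).
Proof.
move=> [s Hs].
pose nt := fun i : 'I_(size s) => nth a0 s i.
have ex_idx : forall m, exists i : 'I_(size s), nt i = m.
  move=> m; have [i [Hi E]] := In_nth a0 (Hs m).
  by exists (Ordinal Hi).
pose delta := fun (S : {set 'I_(size s)}) (l : hatF X) =>
  [set j | pb (exists i, i \in S /\ loop_edge mul gen (nt i) l (nt j))].
have key : forall w S m, (exists j, j \in foldl delta S w /\ nt j = m) <->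
    (exists i, i \in S /\ loop_path mul gen (nt i) w m).
  elim => [|l w IH] S m /=.
    by split; move=> [j [Hj E]]; exists j; split.
  apply: iff_trans (IH _ _) _; split.
    move=> [k [Hk Hp]]; move: Hk; rewrite inE => /pbE [i [Hi He]].
    by exists i; split => //; exists (nt k); split.
  move=> [i [Hi [c [He Hp]]]]; have [k Hk] := ex_idx c; subst c.
  exists k; split => //; rewrite inE; apply/pbE; exists i; by split.
exists {set 'I_(size s)}, [set j | pb (nt j = a0)], delta,
  (fun S : {set 'I_(size s)} => pb (exists j, j \in S /\ nt j = a0)).
move=> w; rewrite /dfa_run; split.
  move=> Hp; apply/pbE; apply/key; have [i Hi] := ex_idx a0.
  exists i; split; first by rewrite inE; apply/pbE.
  by rewrite Hi.
move/pbE/key => [i [Hi Hp]]; move: Hi; rewrite inE => /pbE Hi.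
by rewrite Hi in Hp.
Qed.

Lemma in_map_In (T : eqType) U (f : T -> U) x (l : seq T) :
  x \in l -> List.In (f x) (map f l).
Proof.
elim: l => [|y l IH] //=; rewrite in_cons => /orP [/eqP->|/IH]; by [left | right].
Qed.

Lemma reg_fin (X : finType) (M : Type) (mul : M -> M -> M) (one : M) (sigma : seq X -> M) :
  is_monoid mul one -> monoid_choice mul one sigma ->
  @regular (hatF X) (loop_problem mul one sigma) -> finite_type M.
Proof.
move=> [mA [m1 m1']] [s0 [sM sS]] [Q [q0 [delta [F HF]]]].
have Hinl : forall u a b, loop_path mul (fun x => sigma [:: x]) a (map inl u) b
    <-> b = mul a (sigma u).
  elim => [|x u IH] a b /=.
    by rewrite s0 m1'; split => ->.
  split.
    move=> [c [Hc Hp]]; move: Hp; rewrite Hc; move/IH => ->.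
    by rewrite -mA -sM.
  move=> ->; exists (mul a (sigma [:: x])); split => //.
  by apply/IH; rewrite -mA -sM.
have Hcat : forall u v a b, loop_path mul (fun x => sigma [:: x]) a (u ++ v) b <->
    exists c, loop_path mul (fun x => sigma [:: x]) a u c /\
              loop_path mul (fun x => sigma [:: x]) c v b.
  elim => [|l u IH] v a b /=.
    by split; [move=> H; exists a; split | move=> [c [-> H]]].
  split.
    move=> [c [He Hp]]; move/IH: Hp => [d [H1 H2]].
    by exists d; split => //; exists c; split.
  move=> [d [[c [He H1]] H2]]; exists c; split => //.
  by apply/IH; exists d; split.
have Hinr : forall v a b, loop_path mul (fun x => sigma [:: x]) a (rev (map inr v)) b
    <-> a = mul b (sigma v).
  elim => [|x v IH] a b.
    by rewrite s0 m1'; split.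
  rewrite map_cons rev_cons -cats1; apply: iff_trans (Hcat _ _ _ _) _; split.
    move=> [c [Hp [d [Hd Hn]]]]; move/IH: Hp => ->.
    simpl in Hd; rewrite Hd Hn -mA -sM; by [].
  move=> ->; exists (mul b (sigma [:: x])); split.
    by apply/IH; rewrite -mA -sM.
  by exists b; split.
have Lmem : forall u v, loop_problem mul one sigma (map inl u ++ rev (map inr v))
    <-> sigma u = sigma v.
  move=> u v; rewrite /loop_problem; apply: iff_trans (Hcat _ _ _ _) _; split.
    by move=> [c [/Hinl -> /Hinr]]; rewrite !m1.
  move=> E; exists (mul one (sigma u)); split; first by apply/Hinl.
  by apply/Hinr; rewrite E.
pose w_of := fun m => epsilon (inhabits [::]) (fun w => sigma w = m).
have w_ofP : forall m, sigma (w_of m) = m.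
  move=> m; rewrite /w_of; exact: (epsilon_spec (inhabits [::]) (fun w => sigma w = m) (sS m)).
pose r := fun u => foldl delta q0 (map inl u) : Q.
pose h := fun q => epsilon (inhabits one) (fun m => r (w_of m) = q).
exists (map h (enum Q)) => t.
have -> : t = h (r (w_of t)).
  have Hh : r (w_of (h (r (w_of t)))) = r (w_of t).
    by apply: (epsilon_spec (inhabits one) (fun m => r (w_of m) = r (w_of t))); exists t.
  have Ht := proj2 (Lmem (w_of t) (w_of t)) erefl.
  have := proj1 (HF _) Ht; rewrite /dfa_run foldl_cat.
  have E1 : foldl delta q0 (map inl (w_of t)) = r (w_of t) by [].
  rewrite E1 -Hh /r -foldl_cat => H.
  have := proj2 (HF _) H; move=> /Lmem.
  by move=> E; rewrite !w_ofP in E; rewrite E E.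
by apply: in_map_In; rewrite mem_enum.
Qed.

Lemma part1 (X : finType) (M : Type) (mul : M -> M -> M) (one : M) (sigma : seq X -> M) :
  is_monoid mul one -> monoid_choice mul one sigma ->
  (finite_type M <-> @regular (hatF X) (loop_problem mul one sigma)).
Proof.
move=> Hm Hc; split; last exact: reg_fin.
move=> Hf; exact: (fin_regular mul (fun x => sigma [:: x]) one Hf).
Qed.

Lemma fin_option (S : Type) : finite_type S <-> finite_type (option S).
Proof.
split.
  move=> [s Hs]; exists (None :: List.map Some s) => [[t|]]; last by left.
  by right; apply: List.in_map.
move=> [s Hs].
exists (foldr (fun o acc => match o with Some x => x :: acc | None => acc end) [::] s).
move=> t; move: (Hs (Some t)); elim: s {Hs} => [|o s IH] //= [->|/IH]; first by left.
by case: o => [x|] //; right.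
Qed.

Theorem theorem6p1 :
  (forall (X : finType) (M : Type) (mul : M -> M -> M) (one : M) (sigma : seq X -> M),
     is_monoid mul one -> monoid_choice mul one sigma ->
     (finite_type M <-> @regular (hatF X) (loop_problem mul one sigma))) /\
  (forall (X : finType) (S : Type) (mul : S -> S -> S) (sigma : seq X -> S),
     is_semigroup mul -> semigroup_choice mul sigma ->
     (finite_type S <-> @regular (hatF X) (semigroup_loop_problem mul sigma))).
Proof.
split; first exact: part1.
move=> X S mul sigma Hs [Hc1 Hc2].
have Hm : is_monoid (adj_mul mul) None.
  split; first by move=> [a|] [b|] [c|] //=; rewrite Hs.
  by split => // [[a|]].
have nn : forall (x : X) u, x :: u <> [::] by [].
have Hc' : monoid_choice (adj_mul mul) None (sigma1 sigma).
  split => //; split.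
    move=> [|x u] [|y v] //=; first by rewrite cats0.
    by rewrite -(Hc1 (x :: u) (y :: v)).
  move=> [s|]; last by exists [::].
  have [[|x w] [Hw E]] := Hc2 s; first by [].
  by exists (x :: w); rewrite /= E.
apply: iff_trans (fin_option S) _.
exact: (part1 Hm Hc').
Qed.
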